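(* Let $(x,y,z)(\eta_1)$ be a trajectory of system (S2) such that there is $\eta_{1,*}\in\mathbb{R}$ with $x(\eta_{1,*})>0$, $z(\eta_{1,*})>0$ and $$-\frac{\sigma+2}{p-m}<y(\eta_1)<0\qquad\text{for all }\eta_1>\eta_{1,*}.$$ Then, in the variables $(X,Y,Z)=(1/x,y/x,z/x)$, the trajectory converges as $\eta_1\to\infty$ either to $P_1=(0,0,0)$ or to $P_{\gamma_0}=(0,0,\gamma_0)$, where $\gamma_0=\frac{1}{\alpha(p-1)}$.
   Context: Let $N\geq1$, $m>1$, $\sigma>0$, $p>m$, $L=\sigma(m-1)+2(p-1)$, $\alpha=(\sigma+2)/L$. System (S2) is $$\dot x=x(2-(m-1)y),\quad \dot y=-x-(N-2)y+z-my^2-\tfrac{p-m}{\sigma+2}xy,\quad \dot z=z(\sigma+2+(p-m)y),$$ and under $X=1/x$, $Y=y/x$, $Z=z/x$ it is equivalent (up to time change) to system (S1): $$\dot X=X[(m-1)Y-2X],\quad \dot Y=-Y^2-\tfrac{p-m}{\sigma+2}Y-X-NXY+XZ,\quad \dot Z=Z[(p-1)Y+\sigma X].$$ *)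

(* Defs.v *)
From Stdlib Require Import Reals.
From Coquelicot Require Import Coquelicot.
Open Scope R_scope.

Definition S2_x (m : R) (x y z : R) : R := x * (2 - (m - 1) * y).
Definition S2_y (N m sigma p : R) (x y z : R) : R :=
  - x - (N - 2) * y + z - m * y ^ 2 - (p - m) / (sigma + 2) * x * y.
Definition S2_z (m sigma p : R) (x y z : R) : R :=
  z * (sigma + 2 + (p - m) * y).

Definition solves_S2_at (N m sigma p : R) (x y z : R -> R) (t : R) : Prop :=
  is_derive x t (S2_x m (x t) (y t) (z t)) /\
  is_derive y t (S2_y N m sigma p (x t) (y t) (z t)) /\
  is_derive z t (S2_z m sigma p (x t) (y t) (z t)).

Definition L_const (m sigma p : R) : R := sigma * (m - 1) + 2 * (p - 1).
Definition alpha_const (m sigma p : R) : R := (sigma + 2) / L_const m sigma p.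
Definition gamma0 (m sigma p : R) : R := 1 / (alpha_const m sigma p * (p - 1)).

(* Main.v *)
Require Import Defs.
From Stdlib Require Import Reals Lra Psatz Classical.
From Coquelicot Require Import Coquelicot.
Open Scope R_scope.

Lemma cont_eps f x : continuity_pt f x ->
  forall e, 0 < e -> exists d, 0 < d /\ forall u, Rabs (u - x) < d -> Rabs (f u - f x) < e.
Proof.
  intros H e He. apply continuity_pt_locally with (eps := mkposreal e He) in H.
  destruct H as [d Hd]. exists d. split. apply cond_pos. intros u Hu. apply Hd. exact Hu.
Qed.

Lemma deriv_cont f t d : is_derive f t d -> continuity_pt f t.
Proof. intro H. apply is_derive_Reals in H. apply derivable_continuous_pt. exists d. exact H. Qed.

Lemma mvt f df a b : a < b -> (forall t, a <= t <= b -> is_derive f t (df t)) ->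
  exists c, a < c < b /\ f b - f a = df c * (b - a).
Proof.
  intros Hab H. destruct (MVT_cor2 f df a b Hab) as [c [H1 H2]].
  intros c Hc. apply is_derive_Reals. auto. exists c. auto.
Qed.

Lemma first_hit f a b th : a < b -> (forall t, a <= t <= b -> continuity_pt f t) ->
  f a < th -> th <= f b ->
  exists s, a < s <= b /\ f s = th /\ forall r, a <= r < s -> f r < th.
Proof.
  intros Hab Hc Ha Hb.
  set (E := fun t => a <= t <= b /\ forall r, a <= r <= t -> f r < th).
  assert (HB : bound E). { exists b. intros t [Ht _]. lra. }
  assert (HE : exists t, E t). { exists a. split. lra. intros r Hr. replace r with a by lra. exact Ha. }
  destruct (completeness E HB HE) as [s [Hs1 Hs2]].
  assert (Has : a <= s). { apply Hs1. split. lra. intros r Hr. replace r with a by lra. exact Ha. }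
  assert (Hsb : s <= b). { apply Hs2. intros t [Ht _]. lra. }
  assert (C1 : forall r, a <= r < s -> f r < th).
  { intros r Hr. destruct (classic (exists t, E t /\ r < t)) as [[t [[Ht1 Ht2] Hrt]]|Hn].
    - apply Ht2. lra.
    - exfalso. assert (s <= r). { apply Hs2. intros t Et. apply Rnot_lt_le. intro. apply Hn. exists t. auto. }
      lra. }
  assert (C2 : th <= f s).
  { apply Rnot_lt_le. intro Hlt.
    destruct (cont_eps f s (Hc s (conj Has Hsb)) (th - f s)) as [d [Hd Hd2]]. lra.
    destruct (Req_dec s b) as [->|Hne]. lra.
    assert (E (Rmin b (s + d/2))).
    { split. split. apply Rmin_glb; lra. apply Rmin_l.
      intros r Hr. destruct (Rlt_le_dec r s). apply C1; lra.
      assert (Rabs (r - s) < d). { assert (Rmin b (s + d/2) <= s + d/2) by apply Rmin_r. apply Rabs_def1; lra. }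
      specialize (Hd2 r H). apply Rabs_def2 in Hd2. lra. }
    apply Hs1 in H. assert (s < Rmin b (s + d/2)). { apply Rmin_glb_lt; lra. } lra. }
  assert (Hsa : a < s). { destruct (Req_dec a s) as [<-|]; lra. }
  assert (C3 : f s <= th).
  { apply Rnot_lt_le. intro Hlt.
    destruct (cont_eps f s (Hc s (conj Has Hsb)) (f s - th)) as [d [Hd Hd2]]. lra.
    set (r := Rmax a (s - d/2)).
    assert (Hr1 : a <= r) by apply Rmax_l. assert (Hr2 : s - d/2 <= r) by apply Rmax_r.
    assert (Hr3 : r < s). { apply Rmax_lub_lt; lra. }
    specialize (C1 r (conj Hr1 Hr3)).
    assert (Rabs (r - s) < d) by (apply Rabs_def1; lra).
    specialize (Hd2 r H). apply Rabs_def2 in Hd2. lra. }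
  exists s. split. lra. split. lra. exact C1.
Qed.

Lemma barrier f df a th : (forall t, a <= t -> is_derive f t (df t)) ->
  (forall t, a <= t -> f t = th -> df t < 0) ->
  forall t1, a <= t1 -> f t1 < th -> forall t, t1 <= t -> f t < th.
Proof.
  intros Hd Hs t1 Ht1 Hf1 t Ht. apply Rnot_le_lt. intro Hge.
  assert (t1 < t). { destruct (Req_dec t1 t) as [<-|]; lra. }
  destruct (first_hit f t1 t th H) as [s [Hs1 [Hs2 Hs3]]]; auto.
  intros u Hu. apply (deriv_cont f u (df u)). apply Hd. lra.
  assert (Hneg := Hs s ltac:(lra) Hs2).
  assert (Hl := proj1 (is_derive_Reals f s (df s)) (Hd s ltac:(lra))).
  destruct (Hl (- df s / 2) ltac:(lra)) as [d Hdd].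
  set (h := - Rmin (d/2) ((s - t1)/2)).
  assert (Hm1 : Rmin (d/2) ((s - t1)/2) <= d/2) by apply Rmin_l.
  assert (Hm2 : Rmin (d/2) ((s - t1)/2) <= (s-t1)/2) by apply Rmin_r.
  assert (Hm3 : 0 < Rmin (d/2) ((s - t1)/2)). { apply Rmin_glb_lt. destruct d; simpl; lra. lra. }
  assert (Hh : h <> 0) by (unfold h; lra).
  assert (Hh2 : Rabs h < d). { destruct d as [d dp]. simpl in *. unfold h. rewrite Rabs_Ropp, Rabs_pos_eq; lra. }
  specialize (Hdd h Hh Hh2). apply Rabs_def2 in Hdd.
  set (q := (f (s + h) - f s) / h) in *.
  assert (Hq : f (s + h) - f s = q * h) by (unfold q; field; exact Hh).
  assert (f (s + h) < th). { apply Hs3. unfold h. lra. }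
  assert (h < 0) by (unfold h; lra).
  nra.
Qed.

Lemma eventually_below f df a th dl : 0 < dl -> (forall t, a <= t -> is_derive f t (df t)) ->
  (forall t, a <= t -> th <= f t -> df t <= - dl) ->
  exists T, forall t, T <= t -> f t < th.
Proof.
  intros Hdl Hd Hr. set (T := a + (Rabs (f a - th) + 1) / dl).
  assert (HT : a < T). { unfold T. assert (0 < (Rabs (f a - th) + 1) / dl).
    apply Rdiv_lt_0_compat. pose proof (Rabs_pos (f a - th)). lra. lra. lra. }
  assert (Ex : exists t1, a <= t1 <= T /\ f t1 < th).
  { apply NNPP. intro Hn.
    assert (Hall : forall t, a <= t <= T -> th <= f t).
    { intros t Ht. apply Rnot_lt_le. intro. apply Hn. exists t. auto. }
    destruct (mvt f df a T HT) as [c [Hc Heq]]. intros; apply Hd; lra.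
    assert (df c <= - dl) by (apply Hr; [lra| apply Hall; lra]).
    assert (HTa : (T - a) * dl = Rabs (f a - th) + 1) by (unfold T; field; lra).
    pose proof (Hall T ltac:(lra)). pose proof (Rle_abs (f a - th)). nra. }
  destruct Ex as [t1 [Ht1 Hf1]]. exists T. intros t Ht.
  apply (barrier f df a th Hd) with t1; try lra.
  intros u Hu Heq. pose proof (Hr u Hu ltac:(lra)). lra.
Qed.

Lemma pos_lin f g a : (forall t, a <= t -> is_derive f t (f t * g t)) ->
  (forall t, a < t -> 0 < g t) -> 0 < f a -> forall t, a <= t -> 0 < f t.
Proof.
  intros Hd Hg Ha t Ht. apply Rnot_le_lt. intro Hle.
  assert (a < t). { destruct (Req_dec a t) as [<-|]; lra. }
  assert (Hc : forall u, a <= u <= t -> continuity_pt (fun u => - f u) u).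
  { intros u Hu. apply continuity_pt_opp. apply (deriv_cont f u (f u * g u)). apply Hd. lra. }
  destruct (first_hit (fun u => - f u) a t 0 H Hc ltac:(lra) ltac:(lra)) as [s [Hs1 [Hs2 Hs3]]].
  destruct (mvt f (fun u => f u * g u) a s ltac:(lra)) as [c [Hcc Heq]]. intros; apply Hd; lra.
  pose proof (Hs3 c ltac:(lra)). pose proof (Hg c ltac:(lra)).
  assert (0 < f c * g c * (s - a)) by (apply Rmult_lt_0_compat; [apply Rmult_lt_0_compat|]; lra).
  lra.
Qed.

Lemma der_eq (f : R -> R) (t d1 d2 : R) : is_derive f t d1 -> d1 = d2 -> is_derive f t d2.
Proof. intros H ->. exact H. Qed.

Lemma lim_of f l : (forall eps, 0 < eps -> exists T, forall t, T <= t -> Rabs (f t - l) < eps) ->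
  is_lim f p_infty l.
Proof.
  intro H. apply is_lim_spec. intro eps. destruct (H eps (cond_pos eps)) as [T HT].
  exists T. intros t Ht. apply HT. lra.
Qed.

Lemma der_G (x y z : R -> R) t c dx dy dz : x t <> 0 -> is_derive x t dx -> is_derive y t dy -> is_derive z t dz ->
  is_derive (fun u => z u / x u - 1 - c * y u) t ((dz * x t - z t * dx) / x t ^ 2 - c * dy).
Proof.
  intros H0 Hx Hy Hz.
  pose proof (is_derive_div z x t dz dx Hz Hx H0) as H1.
  pose proof (is_derive_scal y t c dy Hy) as H2.
  pose proof (@is_derive_minus R_AbsRing R_NormedModule _ (fun _ => 1) t _ 0 H1 (is_derive_const 1 t)) as H3.
  pose proof (@is_derive_minus R_AbsRing R_NormedModule _ _ t _ _ H3 H2) as H4.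
  eapply is_derive_ext. 2: eapply der_eq. 2: exact H4.
  intro u. simpl. reflexivity. unfold minus, plus, opp; simpl. ring.
Qed.

Theorem lemma3p4 (N : nat) (m sigma p : R) (x y z : R -> R) (eta_s : R) :
  (1 <= N)%nat -> 1 < m -> 0 < sigma -> m < p ->
  (forall t, eta_s <= t -> solves_S2_at (INR N) m sigma p x y z t) ->
  0 < x eta_s -> 0 < z eta_s ->
  (forall t, eta_s < t -> - ((sigma + 2) / (p - m)) < y t /\ y t < 0) ->
  (is_lim (fun t => 1 / x t) p_infty 0 /\
   is_lim (fun t => y t / x t) p_infty 0 /\
   is_lim (fun t => z t / x t) p_infty 0)
  \/
  (is_lim (fun t => 1 / x t) p_infty 0 /\
   is_lim (fun t => y t / x t) p_infty 0 /\
   is_lim (fun t => z t / x t) p_infty (gamma0 m sigma p)).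
Proof.
  intros HN Hm Hs Hp Hsol Hx0 Hz0 Hy.
  assert (HNr : 1 <= INR N) by (apply (le_INR 1); exact HN).
  set (c := (p - m) / (sigma + 2)).
  assert (Hc : 0 < c) by (unfold c; apply Rdiv_lt_0_compat; lra).
  assert (Hcy : forall t, eta_s < t -> -1 < c * y t < 0).
  { intros t Ht. destruct (Hy t Ht) as [H1 H2].
    assert (E : c * ((sigma + 2) / (p - m)) = 1) by (unfold c; field; lra). nra. }
  assert (Dx : forall t, eta_s <= t -> is_derive x t (x t * (2 - (m - 1) * y t))).
  { intros t Ht. destruct (Hsol t Ht) as [H _]. exact H. }
  assert (Dy : forall t, eta_s <= t -> is_derive y t
     (- x t - (INR N - 2) * y t + z t - m * y t ^ 2 - c * x t * y t)).
  { intros t Ht. destruct (Hsol t Ht) as [_ [H _]]. exact H. }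
  assert (Dz : forall t, eta_s <= t -> is_derive z t (z t * (sigma + 2 + (p - m) * y t))).
  { intros t Ht. destruct (Hsol t Ht) as [_ [_ H]]. exact H. }
  assert (Hxp : forall t, eta_s <= t -> 0 < x t).
  { apply (pos_lin x (fun t => 2 - (m - 1) * y t)); auto.
    intros t Ht. pose proof (Hcy t Ht). destruct (Hy t Ht). nra. }
  assert (Hzp : forall t, eta_s <= t -> 0 < z t).
  { apply (pos_lin z (fun t => sigma + 2 + (p - m) * y t)); auto.
    intros t Ht. pose proof (Hcy t Ht).
    assert (E : (p - m) * y t = (sigma + 2) * (c * y t)) by (unfold c; field; lra). nra. }
  assert (Hxmono : forall t, eta_s <= t -> x eta_s <= x t).
  { intros t Ht. destruct (Req_dec eta_s t) as [<-|Hne]. lra.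
    destruct (mvt x (fun u => x u * (2 - (m - 1) * y u)) eta_s t ltac:(lra)) as [c0 [Hc0 Heq]].
    intros; apply Dx; lra.
    pose proof (Hxp c0 ltac:(lra)). destruct (Hy c0 ltac:(lra)).
    assert (0 < x c0 * (2 - (m - 1) * y c0) * (t - eta_s)).
    { apply Rmult_lt_0_compat; [apply Rmult_lt_0_compat|]; nra. }
    lra. }
  assert (Hxgrow : forall t, eta_s <= t -> x eta_s + 2 * x eta_s * (t - eta_s) <= x t).
  { intros t Ht. destruct (Req_dec eta_s t) as [<-|Hne]. lra.
    destruct (mvt x (fun u => x u * (2 - (m - 1) * y u)) eta_s t ltac:(lra)) as [c0 [Hc0 Heq]].
    intros; apply Dx; lra.
    pose proof (Hxmono c0 ltac:(lra)). destruct (Hy c0 ltac:(lra)).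
    assert (0 <= x c0 * ((m - 1) * - y c0)) by (apply Rmult_le_pos; [lra| apply Rmult_le_pos; lra]).
    assert (2 * x eta_s <= x c0 * (2 - (m - 1) * y c0)) by nra.
    assert (0 <= (x c0 * (2 - (m - 1) * y c0) - 2 * x eta_s) * (t - eta_s)) by (apply Rmult_le_pos; lra).
    lra. }
  assert (Hxlarge : forall B, exists T, eta_s + 1 <= T /\ forall t, T <= t -> B < x t).
  { intro B. exists (Rmax (eta_s + 1) (eta_s + Rabs B / (2 * x eta_s))). split. apply Rmax_l.
    intros t Ht. pose proof (Rmax_l (eta_s + 1) (eta_s + Rabs B / (2 * x eta_s))).
    pose proof (Rmax_r (eta_s + 1) (eta_s + Rabs B / (2 * x eta_s))).
    pose proof (Hxgrow t ltac:(lra)).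
    assert (E : 2 * x eta_s * (Rabs B / (2 * x eta_s)) = Rabs B) by (field; lra).
    pose proof (Rle_abs B). nra. }
  pose (s := fun t => sigma + (p - 1) * y t).
  pose (Z := fun t => z t / x t).
  pose (G := fun t => Z t - 1 - c * y t).
  pose (M := sigma + (p - 1) / c + INR N + 2 + m / c).
  pose (K := fun t => (1 + c * y t) * s t - c * (- (INR N - 2) * y t - m * y t ^ 2)).
  pose (dG := fun t => - (c * x t - s t) * G t + K t).
  assert (DZ : forall t, eta_s <= t -> is_derive Z t (Z t * s t)).
  { intros t Ht. pose proof (Hxp t Ht). eapply der_eq.
    apply (is_derive_div z x t _ _ (Dz t Ht) (Dx t Ht)). lra.
    unfold Z, s. field. lra. }
  assert (DG : forall t, eta_s <= t -> is_derive G t (dG t)).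
  { intros t Ht. pose proof (Hxp t Ht). eapply der_eq.
    apply (der_G x y z t c _ _ _ ltac:(lra) (Dx t Ht) (Dy t Ht) (Dz t Ht)).
    unfold dG, K, G, Z, s. field. lra. }
  assert (DV : forall t, eta_s <= t -> is_derive (fun u => G u ^ 2) t (INR 2 * dG t * G t ^ 1)).
  { intros t Ht. apply is_derive_pow. apply DG. exact Ht. }
  assert (HK : forall t, eta_s < t -> - M <= K t <= M).
  { intros t Ht. pose proof (Hcy t Ht) as Hu.
    set (u := c * y t) in *.
    set (w := (p - 1) / c). set (v := m / c).
    assert (Hw : 0 < w) by (unfold w; apply Rdiv_lt_0_compat; lra).
    assert (Hv : 0 < v) by (unfold v; apply Rdiv_lt_0_compat; lra).
    assert (E : K t = (1 + u) * (sigma + w * u) + (INR N - 2) * u + v * u ^ 2).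
    { unfold K, s, u, w, v. field. lra. }
    rewrite E. unfold M. fold w. fold v.
    assert (0 <= (1 + u) * sigma <= sigma) by nra.
    assert (- w <= (1 + u) * (w * u) <= 0).
    { assert (0 <= w * ((1 + u) * u + 1)) by (apply Rmult_le_pos; nra).
      assert (0 <= w * ((1 + u) * - u)) by (apply Rmult_le_pos; nra). split; nra. }
    assert (- INR N <= (INR N - 2) * u <= 2).
    { assert (0 <= INR N * (u + 1)) by (apply Rmult_le_pos; lra).
      assert (0 <= INR N * - u) by (apply Rmult_le_pos; lra). split; nra. }
    assert (0 <= v * u ^ 2 <= v).
    { assert (0 <= u ^ 2 <= 1) by (simpl; nra). split; nra. }
    split; nra. }
  assert (HGc : forall eps, 0 < eps -> exists T, eta_s + 1 <= T /\ forall t, T <= t -> Rabs (G t) < eps).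
  { intros eps He.
    destruct (Hxlarge ((sigma + (M + 1) / eps) / c)) as [T1 [HT1 HT1']].
    destruct (eventually_below (fun t => G t ^ 2) (fun t => INR 2 * dG t * G t ^ 1) T1 (eps ^ 2) (2 * eps))
      as [T2 HT2].
    - lra.
    - intros t Ht. apply DV. lra.
    - intros t Ht Hge. specialize (HT1' t Ht).
      assert (Hcx : sigma + (M + 1) / eps < c * x t).
      { assert (E : c * ((sigma + (M + 1) / eps) / c) = sigma + (M + 1) / eps) by (field; lra). nra. }
      pose proof (Hcy t ltac:(lra)). pose proof (HK t ltac:(lra)) as HKt. destruct (Hy t ltac:(lra)).
      assert (Hst : s t < sigma) by (unfold s; nra).
      set (A := c * x t - s t).
      assert (HA : M + 1 < A * eps).
      { assert (E : (M + 1) / eps * eps = M + 1) by (field; lra). unfold A. nra. }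
      set (g := Rabs (G t)).
      assert (Hg2 : G t ^ 2 = g ^ 2) by (unfold g; rewrite <- (pow2_abs (G t)); reflexivity).
      assert (Hg0 : 0 <= g) by apply Rabs_pos.
      assert (Hge2 : eps <= g) by nra.
      assert (HGK : G t * K t <= g * M).
      { apply Rle_trans with (Rabs (G t * K t)). apply Rle_abs. rewrite Rabs_mult.
        apply Rmult_le_compat_l. exact Hg0. apply Rabs_le. lra. }
      assert (HAp : 0 < A).
      { assert (0 < M + 1). { unfold M. assert (0 < (p - 1) / c) by (apply Rdiv_lt_0_compat; lra).
          assert (0 < m / c) by (apply Rdiv_lt_0_compat; lra). lra. } nra. }
      assert (P1 : A * eps * g <= A * g ^ 2).
      { assert (0 <= A * g * (g - eps)) by (apply Rmult_le_pos; [apply Rmult_le_pos|]; lra). simpl; nra. }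
      assert (P2 : (M + 1) * g <= A * eps * g).
      { assert (0 <= (A * eps - (M + 1)) * g) by (apply Rmult_le_pos; lra). nra. }
      unfold dG. fold A. simpl INR. simpl pow. simpl pow in Hg2. nra.
    - exists (Rmax T1 T2). split. pose proof (Rmax_l T1 T2). lra.
      intros t Ht. pose proof (Rmax_l T1 T2). pose proof (Rmax_r T1 T2).
      specialize (HT2 t ltac:(lra)). simpl in HT2.
      apply Rabs_def1; nra. }
  set (k := (p - 1) / c).
  set (gm := gamma0 m sigma p).
  assert (Hk : 0 < k) by (unfold k; apply Rdiv_lt_0_compat; lra).
  assert (HL : 0 < L_const m sigma p) by (unfold L_const; nra).
  assert (Hgm : 0 < gm).
  { unfold gm, gamma0, alpha_const. set (L := L_const m sigma p) in *.
    assert (E : 1 / ((sigma + 2) / L * (p - 1)) = L / ((sigma + 2) * (p - 1))) by (field; lra).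
    rewrite E. apply Rdiv_lt_0_compat. lra. nra. }
  assert (Hsig : sigma = k * (1 - gm)).
  { unfold k, gm, c, gamma0, alpha_const, L_const. field. split. nra. split. lra. split; lra. }
  assert (Hkc : k * c = p - 1) by (unfold k; field; lra).
  assert (Hs_eq : forall t, s t = k * (Z t - gm - G t)).
  { intro t. unfold s, G. replace ((p - 1) * y t) with (k * (c * y t)) by (rewrite <- Hkc; ring).
    rewrite Hsig at 1. ring. }
  assert (HZp : forall t, eta_s <= t -> 0 < Z t).
  { intros t Ht. unfold Z. apply Rdiv_lt_0_compat; auto. }
  assert (HZub : forall t, eta_s < t -> Z t < 1 + G t).
  { intros t Ht. pose proof (Hcy t Ht). unfold G. lra. }
  assert (LS : forall eps, 0 < eps -> exists T, forall t, T <= t -> Z t <= gm + eps).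
  { intros eps He. destruct (HGc (eps / 2) ltac:(lra)) as [T [HT HG]]. exists T.
    intros t Ht. apply Rnot_lt_le. intro Hlt.
    assert (Hstay : forall u, t <= u -> - Z u < - (gm + eps)).
    { apply (barrier (fun u => - Z u) (fun u => - (Z u * s u)) T).
      - intros u Hu. exact (@is_derive_opp R_AbsRing R_NormedModule Z u (Z u * s u) (DZ u ltac:(lra))).
      - intros u Hu Heq. pose proof (HG u Hu). apply Rabs_def2 in H. rewrite Hs_eq.
        pose proof (HZp u ltac:(lra)).
        assert (0 < k * (Z u - gm - G u)) by (apply Rmult_lt_0_compat; lra).
        assert (0 < Z u * (k * (Z u - gm - G u))) by (apply Rmult_lt_0_compat; lra). lra.
      - exact Ht.
      - lra. }
    set (dl := (gm + eps) * (k * (eps / 2))).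
    assert (Hdl : 0 < dl) by (unfold dl; apply Rmult_lt_0_compat; [lra| apply Rmult_lt_0_compat; lra]).
    set (u := t + (2 + eps) / dl).
    assert (Hu : (u - t) * dl = 2 + eps) by (unfold u; field; lra).
    assert (Htu : t < u) by (unfold u; assert (0 < (2 + eps) / dl) by (apply Rdiv_lt_0_compat; lra); lra).
    destruct (mvt Z (fun v => Z v * s v) t u Htu) as [c0 [Hc0 Heq]].
    { intros v Hv. apply DZ. lra. }
    pose proof (Hstay c0 ltac:(lra)). pose proof (HG c0 ltac:(lra)) as HG0. apply Rabs_def2 in HG0.
    assert (Hs0 : k * (eps / 2) <= s c0).
    { rewrite Hs_eq. apply Rmult_le_compat_l; lra. }
    assert (dl <= Z c0 * s c0).
    { unfold dl. apply Rmult_le_compat; try lra. apply Rmult_le_pos; lra. }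
    assert (dl * (u - t) <= Z c0 * s c0 * (u - t)) by (apply Rmult_le_compat_r; lra).
    pose proof (HZub u ltac:(lra)). pose proof (HG u ltac:(lra)) as HGu. apply Rabs_def2 in HGu.
    pose proof (HZp t ltac:(lra)). lra. }
  assert (H1x : is_lim (fun t => 1 / x t) p_infty 0).
  { apply lim_of. intros eps He. destruct (Hxlarge (1 / eps)) as [T [HT HT']]. exists T.
    intros t Ht. specialize (HT' t Ht). pose proof (Hxp t ltac:(lra)).
    assert (E1 : 1 / x t * x t = 1) by (field; lra).
    assert (E2 : eps * (1 / eps) = 1) by (field; lra).
    assert (0 < 1 / x t) by (apply Rdiv_lt_0_compat; lra).
    rewrite Rminus_0_r, Rabs_pos_eq by lra. nra. }
  assert (Hyx : is_lim (fun t => y t / x t) p_infty 0).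
  { apply lim_of. intros eps He. destruct (Hxlarge (1 / (c * eps))) as [T [HT HT']]. exists T.
    intros t Ht. specialize (HT' t Ht). pose proof (Hxp t ltac:(lra)). pose proof (Hcy t ltac:(lra)).
    set (q := y t / x t).
    assert (E1 : y t = q * x t) by (unfold q; field; lra).
    assert (E2 : c * eps * (1 / (c * eps)) = 1) by (field; lra).
    assert (1 < c * eps * x t).
    { assert (0 < c * eps * (x t - 1 / (c * eps))) by (apply Rmult_lt_0_compat; [apply Rmult_lt_0_compat|]; lra). nra. }
    assert (Hcx : 0 < c * x t) by (apply Rmult_lt_0_compat; lra).
    rewrite Rminus_0_r. apply Rabs_def1.
    - apply Rnot_le_lt. intro. assert (0 <= c * x t * q) by (apply Rmult_le_pos; lra). rewrite E1 in *. nra.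
    - apply Rnot_le_lt. intro. assert (0 <= c * x t * (- eps - q)) by (apply Rmult_le_pos; lra). rewrite E1 in *. nra. }
  destruct (classic (exists (eps T1 : R), 0 < eps /\ eta_s + 1 <= T1 /\ (forall t, T1 <= t -> Rabs (G t) < eps / 2) /\ Z T1 < gm - eps))
    as [[eps [T1 [He [HT1 [HG1 HZ1]]]]] | Hn].
  - left. split. exact H1x. split. exact Hyx.
    assert (Hstay : forall u, T1 <= u -> Z u < gm - eps).
    { apply (barrier Z (fun u => Z u * s u) T1).
      - intros u Hu. apply DZ. lra.
      - intros u Hu Heq. pose proof (HG1 u Hu). apply Rabs_def2 in H. rewrite Hs_eq.
        pose proof (HZp u ltac:(lra)).
        assert (k * (Z u - gm - G u) < 0).
        { assert (0 < k * - (Z u - gm - G u)) by (apply Rmult_lt_0_compat; lra). lra. }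
        assert (0 < Z u * - (k * (Z u - gm - G u))) by (apply Rmult_lt_0_compat; lra). lra.
      - lra.
      - exact HZ1. }
    assert (Hsn : forall u, T1 <= u -> s u <= - (k * (eps / 2))).
    { intros u Hu. pose proof (Hstay u Hu). pose proof (HG1 u Hu) as H0. apply Rabs_def2 in H0.
      rewrite Hs_eq. assert (Z u - gm - G u <= - (eps / 2)) by lra.
      assert (k * (Z u - gm - G u) <= k * - (eps / 2)) by (apply Rmult_le_compat_l; lra). lra. }
    apply lim_of. intros eta Heta.
    destruct (eventually_below Z (fun u => Z u * s u) T1 eta (eta * (k * (eps / 2)))) as [T2 HT2].
    + apply Rmult_lt_0_compat. lra. apply Rmult_lt_0_compat; lra.
    + intros u Hu. apply DZ. lra.
    + intros u Hu Hge. pose proof (Hsn u Hu).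
      assert (0 <= (Z u - eta) * (k * (eps / 2))) by (apply Rmult_le_pos; [lra|apply Rmult_le_pos; lra]).
      assert (0 <= Z u * (- (k * (eps / 2)) - s u)) by (apply Rmult_le_pos; lra).
      nra.
    + exists (Rmax T1 T2). intros t Ht. pose proof (Rmax_l T1 T2). pose proof (Rmax_r T1 T2).
      pose proof (HT2 t ltac:(lra)). pose proof (HZp t ltac:(lra)).
      rewrite Rminus_0_r. change (z t / x t) with (Z t). rewrite Rabs_pos_eq by lra. lra.
  - right. split. exact H1x. split. exact Hyx.
    apply lim_of. intros eta Heta.
    destruct (LS (eta / 2) ltac:(lra)) as [T3 HT3].
    destruct (HGc (eta / 2 / 2) ltac:(lra)) as [T4 [HT4 HG4]].
    assert (Hlow : forall t, T4 <= t -> gm - eta / 2 <= Z t).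
    { intros t Ht. apply Rnot_lt_le. intro Hlt. apply Hn. exists (eta / 2), t.
      split. lra. split. lra. split. intros u Hu. apply HG4. lra. exact Hlt. }
    exists (Rmax T3 T4). intros t Ht. pose proof (Rmax_l T3 T4). pose proof (Rmax_r T3 T4).
    pose proof (HT3 t ltac:(lra)). pose proof (Hlow t ltac:(lra)).
    apply Rabs_def1; fold (Z t); lra.
Qed.
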